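(* Let $l:\mathcal{Y}\times\mathbb{R}\to\mathbb{R}$ be differentiable in its second argument with $|\partial_2 l(y,s)|\le\Lambda$ for all $y\in\mathcal{Y}$, $s\in\mathbb{R}$. Let $(y,z)$ and $(y',z')$ be independent, identically distributed random pairs with values in $\mathcal{Y}\times\mathbb{R}^n$ and $\mathbb{E}\|z\|^2<\infty$, and let $x,x'\in\mathbb{R}^n$ be (possibly random) vectors independent of $(y,z),(y',z')$. Then $$\mathbb{E}_{y,z,y',z'}\Big[\big\langle \nabla_x l(y,\langle z,x\rangle),\,\nabla_x l(y',\langle z',x'\rangle)\big\rangle\Big]\le \Lambda^2\,\big\|\mathbb{E}_{z}[z z^\top]\big\|_{\mathrm{Frob}}=:L^2\alpha,$$ where $\nabla_x l(y,\langle z,x\rangle)=z\,\partial_2 l(y,\langle z,x\rangle)$ and $\|\cdot\|_{\mathrm{Frob}}$ is the Frobenius norm.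
   Context: $L>0$ is the bound on gradient norms of the losses, and the equality $L^2\alpha=\Lambda^2\|\mathbb{E}[zz^\top]\|_{\mathrm{Frob}}$ defines the correlation factor $\alpha$. *)

(* Defs.v *)
From HB Require Import structures.
From mathcomp Require Import all_boot all_order all_algebra.
From mathcomp Require Import all_classical all_reals all_analysis.
Set Implicit Arguments. Unset Strict Implicit. Unset Printing Implicit Defensive.
Import Order.TTheory GRing.Theory Num.Theory.
Local Open Scope ring_scope.

Definition dotv (R : realType) (n : nat) (u v : 'I_n -> R) : R :=
  \sum_(i < n) u i * v i.

Definition frob_norm (R : realType) (n : nat) (M : 'M[R]_n) : R :=
  Num.sqrt (\sum_(i < n) \sum_(j < n) M i j ^+ 2).

Definition second_moment (d : measure_display) (T : measurableType d)
  (R : realType) (P : probability T R) (n : nat) (Z : T -> 'I_n -> R) : 'M[R]_n :=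
  \matrix_(i < n, j < n) Rintegral P setT (fun t => Z t i * Z t j).

(* Main.v *)
Require Import Defs.
From HB Require Import structures.
From mathcomp Require Import all_boot all_order all_algebra.
From mathcomp Require Import all_classical all_reals all_analysis.
From mathcomp Require Import ring lra measurable_realfun.
Import Order.TTheory GRing.Theory Num.Theory.
Local Open Scope ring_scope.

Lemma quad (R : realFieldType) (U Q V : R) :
  0 <= U -> (forall t, 2 * t * Q <= t ^+ 2 * U + V) -> Q ^+ 2 <= U * V.
Proof.
move=> U0 H.
have [U0'|Upos] := eqVneq U 0.
  have [Q0|Qn0] := eqVneq Q 0; first by rewrite Q0 U0' expr0n mul0r.
  have := H ((`|V| + 1) / (2 * Q)).
  have -> : 2 * ((`|V| + 1) / (2 * Q)) * Q = `|V| + 1 by field; rewrite Qn0.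
  rewrite U0' mulr0 add0r => HH; exfalso.
  have := ler_norm V; lra.
have Up : 0 < U by rewrite lt_def Upos U0.
have := H (Q / U).
have -> : 2 * (Q / U) * Q = 2 * (Q ^+ 2 / U) by rewrite expr2; field; rewrite Upos.
have -> : (Q / U) ^+ 2 * U = Q ^+ 2 / U by rewrite expr2 [in RHS]expr2; field; rewrite Upos.
move=> HH.
have : Q ^+ 2 / U <= V by lra.
by rewrite ler_pdivrMr // mulrC.
Qed.


Lemma cs2 (R : realFieldType) n (u v : 'I_n -> 'I_n -> R) :
  (\sum_i \sum_j u i j * v i j) ^+ 2 <=
  (\sum_i \sum_j u i j ^+ 2) * (\sum_i \sum_j v i j ^+ 2).
Proof.
apply: quad.
  by apply: sumr_ge0 => i _; apply: sumr_ge0 => j _; exact: sqr_ge0.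
move=> t.
rewrite mulr_sumr mulr_sumr -big_split /=.
apply: ler_sum => i _.
rewrite mulr_sumr mulr_sumr -big_split /=.
apply: ler_sum => j _.
have := sqr_ge0 (t * u i j - v i j).
rewrite !expr2; lra.
Qed.

Lemma sum_sq_prod (R : realFieldType) n (a : 'I_n -> R) :
  \sum_i \sum_j (a i * a j) ^+ 2 = (\sum_i a i ^+ 2) ^+ 2.
Proof.
rewrite expr2 mulr_suml; apply: eq_bigr => i _.
rewrite mulr_sumr; apply: eq_bigr => j _.
by rewrite exprMn.
Qed.

Lemma quadform_le (R : realType) n (a : 'I_n -> R) (M : 'M[R]_n) :
  \sum_i \sum_j a i * a j * M i j <= (\sum_i a i ^+ 2) * frob_norm M.
Proof.
set Q := \sum_i \sum_j _.
set A := \sum_i _.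
have A0 : 0 <= A by apply: sumr_ge0 => i _; exact: sqr_ge0.
set S := \sum_i \sum_j M i j ^+ 2.
have S0 : 0 <= S by apply: sumr_ge0 => i _; apply: sumr_ge0 => j _; exact: sqr_ge0.
have F0 : 0 <= frob_norm M by rewrite /frob_norm sqrtr_ge0.
have FS : frob_norm M ^+ 2 = S by rewrite /frob_norm sqr_sqrtr.
have := @cs2 R n (fun i j => a i * a j) M.
rewrite sum_sq_prod -/Q -/A -/S -FS => H.
have H2 : Q ^+ 2 <= (A * frob_norm M) ^+ 2 by rewrite exprMn.
have AF0 : 0 <= A * frob_norm M by exact: mulr_ge0.
move: H2 AF0; set B := A * frob_norm M => H2 B0.
rewrite !expr2 in H2; nra.
Qed.


Lemma int_sum d (T : measurableType d) (R : realType)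
  (mu : {measure set T -> \bar R}) n (f : 'I_n -> T -> R) :
  (forall i, mu.-integrable setT (EFin \o f i)) ->
  mu.-integrable setT (EFin \o (fun x => \sum_i f i x)) /\
  Rintegral mu setT (fun x => \sum_i f i x) = \sum_i Rintegral mu setT (f i).
Proof.
elim: n f => [|n IH] f fi.
  split.
    apply: (eq_integrable measurableT _ _ _ (integrable0 mu setT)) => //.
    by move=> x _; rewrite /= big_ord0.
  rewrite big_ord0.
  under eq_Rintegral do rewrite big_ord0.
  by rewrite Rintegral_cst // mul0r.
have [i1 e1] := IH (fun i => f (widen_ord (leqnSn n) i)) (fun i => fi _).
split.
  apply: (eq_integrable measurableT _ _ _ (integrableD measurableT i1 (fi ord_max))) => //.
  by move=> x _; rewrite /= big_ord_recr.
under eq_Rintegral do rewrite big_ord_recr.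
rewrite RintegralD //= ?e1 ?big_ord_recr //.
Qed.


Lemma prod_int d (T : measurableType d) (R : realType) (P : probability T R)
  (f g : T -> R) :
  P.-integrable setT (EFin \o f) -> P.-integrable setT (EFin \o g) ->
  (P \x P)%E.-integrable setT (EFin \o (fun tt : T * T => f tt.1 * g tt.2)) /\
  Rintegral (P \x P)%E setT (fun tt : T * T => f tt.1 * g tt.2) =
  Rintegral P setT f * Rintegral P setT g.
Proof.
move=> fi gi.
have mf : measurable_fun setT f by apply/measurable_EFinP; exact: measurable_int fi.
have mg : measurable_fun setT g by apply/measurable_EFinP; exact: measurable_int gi.
have mF : measurable_fun setT (EFin \o (fun tt : T * T => f tt.1 * g tt.2)).
  apply/measurable_EFinP; apply: measurable_funM.
    exact: measurableT_comp mf measurable_fst.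
  exact: measurableT_comp mg measurable_snd.
have afin : (\int[P]_x `|f x|%:E < +oo)%E.
  by case/integrableP: fi.
have bfin : (\int[P]_x `|g x|%:E < +oo)%E.
  by case/integrableP: gi.
have Fi : (P \x P)%E.-integrable setT (EFin \o (fun tt : T * T => f tt.1 * g tt.2)).
  apply/(integrable12ltyP P P mF) => /=.
  under eq_integral do under eq_integral do rewrite normrM EFinM.
  have mnf : measurable_fun setT (fun x => `|f x|%:E).
    by apply/measurable_EFinP; exact: measurableT_comp.
  have mng : measurable_fun setT (fun x => `|g x|%:E).
    by apply/measurable_EFinP; exact: measurableT_comp.
  under eq_integral do rewrite ge0_integralZl //.
  rewrite ge0_integralZr //; last by apply: integral_ge0.
  rewrite lte_mul_pinfty //; first by apply: integral_ge0 => x _; rewrite lee_fin.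
  by rewrite ge0_fin_numE //; apply: integral_ge0 => x _; rewrite lee_fin.


split => //.
rewrite /Rintegral -(integral12_prod_meas1 Fi) /fubini_F /=.
have gfin := integrable_fin_num measurableT gi.
have ffin := integrable_fin_num measurableT fi.
under eq_integral do under eq_integral do rewrite EFinM.
under eq_integral do rewrite (integralZl measurableT gi).
rewrite -(fineK gfin) (integralZr measurableT fi) -(fineK ffin) /=.
by [].
Qed.


Lemma norm_prod_le (R : realType) (a b : R) : `|a * b| <= `|a ^+ 2 + b ^+ 2|.
Proof.
rewrite normrM [X in _ <= X]ger0_norm; last by rewrite addr_ge0 ?sqr_ge0.
rewrite -(real_normK (num_real a)) -(real_normK (num_real b)).
have := normr_ge0 a; have := normr_ge0 b.
move: `|a| `|b| => x y hx hy; rewrite !expr2; nra.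
Qed.

Lemma key d (T : measurableType d) (R : realType) (P : probability T R) n
  (Z : T -> 'I_n -> R) (g : T -> R) (Lam : R) :
  (forall i, measurable_fun setT (fun t => Z t i)) ->
  measurable_fun setT g -> (forall t, `|g t| <= Lam) ->
  P.-integrable setT (fun t => (\sum_i Z t i ^+ 2)%:E) ->
  \sum_i (Rintegral P setT (fun t => Z t i * g t)) ^+ 2
    <= Lam ^+ 2 * frob_norm (second_moment P Z).
Proof.
move=> mZ mg gL iS.
have g2 t : g t ^+ 2 <= Lam ^+ 2.
  rewrite -(real_normK (num_real (g t))).
  have := normr_ge0 (g t); have := gL t; move: `|g t| => y; rewrite !expr2; nra.
have iZ2 i : P.-integrable setT (EFin \o (fun t => Z t i ^+ 2)).
  apply: (le_integrable measurableT _ _ iS).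
    by apply/measurable_EFinP; exact: measurable_funX.
  move=> t _ /=; rewrite lee_fin ger0_norm ?sqr_ge0 // ger0_norm; last first.
    by apply: sumr_ge0 => k _; exact: sqr_ge0.
  rewrite (bigD1 i) //= lerDl.
  by apply: sumr_ge0 => k _; exact: sqr_ge0.
have icst (c : R) : P.-integrable setT (EFin \o (fun _ : T => c)).
  exact: finite_measure_integrable_cst.
have iZZ i j : P.-integrable setT (EFin \o (fun t => Z t i * Z t j)).
  apply: (le_integrable measurableT _ _ (integrableD measurableT (iZ2 i) (iZ2 j))).
    by apply/measurable_EFinP; exact: measurable_funM.
  by move=> t _ /=; rewrite lee_fin; exact: norm_prod_le.
have iZg i : P.-integrable setT (EFin \o (fun t => Z t i * g t)).
  apply: (le_integrable measurableT _ _ (integrableD measurableT (iZ2 i) (icst (Lam ^+ 2)))).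
    by apply/measurable_EFinP; exact: measurable_funM.
  move=> t _ /=; rewrite lee_fin; apply: (le_trans (norm_prod_le _ _ _)).
  rewrite !ger0_norm ?addr_ge0 ?sqr_ge0 //.
  by rewrite lerD2l.
set a := fun i => Rintegral P setT (fun t => Z t i * g t).
set A := \sum_i a i ^+ 2.
set Q := \sum_i \sum_j a i * a j * second_moment P Z i j.
have ihg : forall i, P.-integrable setT (EFin \o (fun t => a i * (Z t i * g t))).
  move=> i; apply: (eq_integrable measurableT _ _ _ (integrableZl measurableT (a i) (iZg i))).
  by move=> t _ /=; rewrite EFinM.
have [ihgs ehg] := @int_sum _ _ _ P _ _ ihg.
have ihh : forall i, P.-integrable setT
   (EFin \o (fun t => \sum_j (a i * a j) * (Z t i * Z t j))).
  move=> i.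
  have ihh' : forall j, P.-integrable setT
     (EFin \o (fun t => (a i * a j) * (Z t i * Z t j))).
    move=> j; apply: (eq_integrable measurableT _ _ _ (integrableZl measurableT (a i * a j) (iZZ i j))).
    by move=> t _ /=; rewrite EFinM.
  by have [] := @int_sum _ _ _ P _ _ ihh'.
have [ihhs ehh] := @int_sum _ _ _ P _ _ ihh.
have EA : Rintegral P setT (fun t => \sum_i a i * (Z t i * g t)) = A.
  rewrite ehg; apply: eq_bigr => i _.
  by rewrite RintegralZl // expr2.
have EQ : Rintegral P setT (fun t => \sum_i \sum_j (a i * a j) * (Z t i * Z t j)) = Q.
  rewrite ehh; apply: eq_bigr => i _.
  have ihh' : forall j, P.-integrable setT
     (EFin \o (fun t => (a i * a j) * (Z t i * Z t j))).
    move=> j; apply: (eq_integrable measurableT _ _ _ (integrableZl measurableT (a i * a j) (iZZ i j))).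
    by move=> t _ /=; rewrite EFinM.
  have [_ ->] := @int_sum _ _ _ P _ _ ihh'.
  apply: eq_bigr => j _.
  by rewrite RintegralZl // mxE.
set h := fun t => \sum_i a i * Z t i.
have hgE t : \sum_i a i * (Z t i * g t) = h t * g t.
  by rewrite /h mulr_suml; apply: eq_bigr => i _; rewrite mulrA.
have hhE t : \sum_i \sum_j (a i * a j) * (Z t i * Z t j) = h t ^+ 2.
  rewrite /h expr2 mulr_suml; apply: eq_bigr => i _.
  rewrite mulr_sumr; apply: eq_bigr => j _.
  by rewrite mulrACA.
have Q0 : 0 <= Q.
  rewrite -EQ; apply: Rintegral_ge0 => t _.
  by rewrite hhE sqr_ge0.
have quadI : forall s, 2 * s * A <= s ^+ 2 * Q + Lam ^+ 2.
  move=> s.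
  rewrite -EA -EQ.
  have P1 : fine (P setT) = 1 by rewrite probability_setT.
  rewrite -RintegralZl //.
  rewrite -RintegralZl //.
  have -> : Lam ^+ 2 = Rintegral P setT (fun _ => Lam ^+ 2).
    by rewrite Rintegral_cst // P1 mulr1.
  rewrite -RintegralD //; last first.
    apply: (eq_integrable measurableT _ _ _ (integrableZl measurableT (s ^+ 2) ihhs)).
    by move=> t _ /=; rewrite EFinM.
  apply: le_Rintegral => //.
  - apply: (eq_integrable measurableT _ _ _ (integrableZl measurableT (2 * s) ihgs)).
    by move=> t _ /=; rewrite EFinM.
  - apply: (eq_integrable measurableT _ _ _ (integrableD measurableT
       (integrableZl measurableT (s ^+ 2) ihhs) (icst (Lam ^+ 2)))).
    by move=> t _ /=; rewrite EFinD EFinM.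
  move=> t _; rewrite hgE hhE.
  have := g2 t; have := sqr_ge0 (s * h t - g t).
  rewrite !expr2; nra.
have HA : A ^+ 2 <= Q * Lam ^+ 2 by apply: quad.
have HQ : Q <= A * frob_norm (second_moment P Z) by exact: quadform_le.
have A0 : 0 <= A by apply: sumr_ge0 => i _; exact: sqr_ge0.
have L0 : 0 <= Lam ^+ 2 by exact: sqr_ge0.
move: HA HQ A0 L0; set F := frob_norm _; set L2 := Lam ^+ 2 => HA HQ A0 L0.
have F0 : 0 <= F by rewrite /F /frob_norm sqrtr_ge0.
rewrite expr2 in HA.
have H1 : Q * L2 <= A * F * L2 by exact: ler_wpM2r.
have H2 : A * A <= A * (L2 * F) by lra.
have [->|An0] := eqVneq A 0; first exact: mulr_ge0.
have Ap : 0 < A by rewrite lt_def An0 A0.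
by rewrite -(ler_pM2l Ap).
Qed.


Lemma sq_le (R : realType) (y L : R) : `|y| <= L -> y ^+ 2 <= L ^+ 2.
Proof.
move=> h; rewrite -(real_normK (num_real y)).
have := normr_ge0 y; move: h; move: `|y| => z; rewrite !expr2; nra.
Qed.

Lemma sum_ab (R : realType) n (a b : 'I_n -> R) :
  2 * \sum_i a i * b i <= \sum_i a i ^+ 2 + \sum_i b i ^+ 2.
Proof.
rewrite mulr_sumr -big_split /=; apply: ler_sum => i _.
have := sqr_ge0 (a i - b i); rewrite !expr2; lra.
Qed.

Lemma fin3 (R : realType) (u v w Lf : R) :
  2 * u <= v + w -> v <= Lf -> w <= Lf -> u <= Lf.
Proof. move=> h1 h2 h3; lra. Qed.

Theorem lemma5 (R : realType) (Ycal : Type) (l : Ycal -> R -> R) (Lam : R)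
  (n : nat) (d : measure_display) (T : measurableType d) (P : probability T R)
  (Y : T -> Ycal) (Z : T -> 'I_n -> R) (x x' : 'I_n -> R) :
  (forall y s, derivable (l y) s 1) ->
  (forall y s, `| derive1 (l y) s | <= Lam) ->
  (forall i, measurable_fun setT (fun t => Z t i)) ->
  (forall w : 'I_n -> R,
      measurable_fun setT (fun t => derive1 (l (Y t)) (dotv (Z t) w))) ->
  P.-integrable setT (fun t => (\sum_(i < n) Z t i ^+ 2)%:E) ->
  Rintegral (P \x P)%E setT
    (fun tt : T * T =>
       dotv (fun i => Z tt.1 i * derive1 (l (Y tt.1)) (dotv (Z tt.1) x))
            (fun i => Z tt.2 i * derive1 (l (Y tt.2)) (dotv (Z tt.2) x')))
  <= Lam ^+ 2 * frob_norm (second_moment P Z).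
Proof.
move=> _ hL mZ mG iS.
pose g1 : T -> R := fun t => derive1 (l (Y t)) (dotv (Z t) x).
pose g2 : T -> R := fun t => derive1 (l (Y t)) (dotv (Z t) x').
pose a := fun i => Rintegral P setT (fun t => Z t i * g1 t).
pose b := fun i => Rintegral P setT (fun t => Z t i * g2 t).
have K1 : \sum_i a i ^+ 2 <= Lam ^+ 2 * frob_norm (second_moment P Z) :=
  @key _ _ _ P n Z g1 Lam mZ (mG x) (fun t => hL _ _) iS.
have K2 : \sum_i b i ^+ 2 <= Lam ^+ 2 * frob_norm (second_moment P Z) :=
  @key _ _ _ P n Z g2 Lam mZ (mG x') (fun t => hL _ _) iS.
have icst (c : R) : P.-integrable setT (EFin \o (fun _ : T => c)).
  exact: finite_measure_integrable_cst.
have iZ2 i : P.-integrable setT (EFin \o (fun t => Z t i ^+ 2)).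
  apply: (le_integrable measurableT _ _ iS).
    by apply/measurable_EFinP; exact: measurable_funX.
  move=> t _ /=; rewrite lee_fin ger0_norm ?sqr_ge0 // ger0_norm; last first.
    by apply: sumr_ge0 => k _; exact: sqr_ge0.
  rewrite (bigD1 i) //= lerDl.
  by apply: sumr_ge0 => k _; exact: sqr_ge0.
have iZg (g : T -> R) : measurable_fun setT g -> (forall t, g t ^+ 2 <= Lam ^+ 2) ->
    forall i, P.-integrable setT (EFin \o (fun t => Z t i * g t)).
  move=> mg g2L i.
  apply: (le_integrable measurableT _ _ (integrableD measurableT (iZ2 i) (icst (Lam ^+ 2)))).
    by apply/measurable_EFinP; exact: measurable_funM.
  move=> t _ /=; rewrite lee_fin; apply: (le_trans (norm_prod_le _ _ _)).
  rewrite !ger0_norm ?addr_ge0 ?sqr_ge0 //.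
  by rewrite lerD2l.
have i1 := iZg g1 (mG x) (fun t => sq_le _ _ _ (hL _ _)).
have i2 := iZg g2 (mG x') (fun t => sq_le _ _ _ (hL _ _)).
have ip : forall i, (P \x P)%E.-integrable setT
    (EFin \o (fun tt : T * T => (Z tt.1 i * g1 tt.1) * (Z tt.2 i * g2 tt.2))).
  by move=> i; have [] := @prod_int _ _ _ P _ _ (i1 i) (i2 i).
have [_ E] := @int_sum _ _ _ (P \x P)%E _ _ ip.
change (Rintegral (P \x P)%E setT (fun tt : T * T => \sum_i Z tt.1 i * g1 tt.1 * (Z tt.2 i * g2 tt.2)) <= Lam ^+ 2 * frob_norm (second_moment P Z)).
rewrite E.
have -> : \sum_i Rintegral (P \x P)%E setT
      (fun tt : T * T => Z tt.1 i * g1 tt.1 * (Z tt.2 i * g2 tt.2))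
    = \sum_i a i * b i.
  apply: eq_bigr => i _.
  by have [_ ->] := @prod_int _ _ _ P _ _ (i1 i) (i2 i).
have : 2 * \sum_i a i * b i <= \sum_i a i ^+ 2 + \sum_i b i ^+ 2.
  exact: sum_ab.
move=> H; exact: (fin3 _ _ _ _ _ H K1 K2).
Qed.
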